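(* There exist constants $k>0$ and $\epsilon>0$ such that for every finite non-empty set $J$ of vertices of the hexacarpet $H$, $|\partial J|\ge k|J|^{\epsilon}$. Here $\partial J$ is the set of edges of $H$ with exactly one endpoint in $J$.
   Context: Barycentric subdivisions: $T_0$ is an equilateral triangle with vertices $v_0,v_1,v_2$. $T_n$ is obtained by subdividing every triangular face $\{x,y,z\}$ of $T_{n-1}$ into the six triangles $\{x,m_{xy},c\},\{m_{xy},y,c\},\{y,m_{yz},c\},\{m_{yz},z,c\},\{z,m_{zx},c\},\{m_{zx},x,c\}$, where $m_{uv}$ are side midpoints and $c$ is the barycenter. $H_n$ is the graph whose vertices are the $6^n$ triangular faces of $T_n$, with an edge between two faces for each side they share. This is the planar dual of $T_n$ with the vertex for the unbounded face deleted. $H_{n+1}$ consists of six copies of $H_n$, one per face of $T_1$. $H_n$ is identified with the copy corresponding to the face $\{v_0,b_{01},b\}$ of $T_1$, where $b_{01}$ is the midpoint of $v_0v_1$ and $b$ is the barycenter. The hexacarpet $H$ is the increasing union of the $H_n$. *)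

(* Defs.v *)
From mathcomp Require Import all_boot all_algebra.

Local Open Scope ring_scope.

(* Points of the plane of T_0 in barycentric coordinates w.r.t. v0 v1 v2.
   Sharing sides is an affine notion, so this is the equilateral triangle. *)
Definition pt := (rat * rat * rat)%type.

Definition v0 : pt := (1, 0, 0).
Definition v1 : pt := (0, 1, 0).
Definition v2 : pt := (0, 0, 1).

Definition midp (p q : pt) : pt :=
  ((p.1.1 + q.1.1) / 2%:R, (p.1.2 + q.1.2) / 2%:R, (p.2 + q.2) / 2%:R).

Definition baryc (p q r : pt) : pt :=
  ((p.1.1 + q.1.1 + r.1.1) / 3%:R, (p.1.2 + q.1.2 + r.1.2) / 3%:R,
   (p.2 + q.2 + r.2) / 3%:R).

Definition face := (pt * pt * pt)%type.

Definition child (i : nat) (f : face) : face :=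
  let: (x, y, z) := f in
  let mxy := midp x y in let myz := midp y z in let mzx := midp z x in
  let c := baryc x y z in
  match i with
  | 0 => (x, mxy, c)
  | 1 => (mxy, y, c)
  | 2 => (y, myz, c)
  | 3 => (myz, z, c)
  | 4 => (z, mzx, c)
  | _ => (mzx, x, c)
  end.

(* Address of faces: a face of T_n is numbered by v < 6^n whose base-6 digits
   (n of them, most significant first) are the child indices from the top level
   down.  The face of T_{n+1} numbered v is child (v mod 6) of the face of T_n
   numbered v / 6.  Prepending the digit 0 (= the face {v0,b01,b} of T_1)
   does not change the number, which realises the identification of H_n with
   the copy of H_n inside the face {v0,b01,b}; hence the vertex set of the
   hexacarpet H = increasing union of the H_n is nat, with H_n = [0, 6^n). *)
Fixpoint face_of (n v : nat) : face :=
  match n with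
  | 0 => (v0, v1, v2)
  | n'.+1 => child (v %% 6) (face_of n' (v %/ 6))
  end.

Definition verts (f : face) : seq pt := [:: f.1.1; f.1.2; f.2].

Definition share_side (f g : face) : bool :=
  (2 <= count (fun p => p \in verts g) (verts f))%N.

Definition hex_adj (u v : nat) : Prop :=
  u <> v /\ exists n : nat,
    [/\ (u < 6 ^ n)%N, (v < 6 ^ n)%N & share_side (face_of n u) (face_of n v)].

(* Edges of H with exactly one endpoint in J, each represented by the
   ordered pair (endpoint in J, endpoint outside J).  Two distinct faces share
   at most one side, so this is a bijection with the edge boundary. *)
Definition hex_boundary (J : seq nat) (e : nat * nat) : Prop :=
  e.1 \in J /\ e.2 \notin J /\ hex_adj e.1 e.2.

(* Main.v *)
Require Import Defs.
From mathcomp Require Import all_boot all_algebra.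
From mathcomp Require algebra_tactics.ring algebra_tactics.lra.
From mathcomp Require Import zify.
From Stdlib Require Import ClassicalEpsilon.

Module G1.
Import mathcomp.algebra_tactics.ring mathcomp.algebra_tactics.lra.
Import GRing.Theory Num.Theory.

Section Geo.
Local Open Scope ring_scope.

Definition lerp (a b : pt) (r : rat) : pt :=
  (a.1.1 + r * (b.1.1 - a.1.1), a.1.2 + r * (b.1.2 - a.1.2), a.2 + r * (b.2 - a.2)).

Lemma lerp_lerp a b r s u : lerp (lerp a b r) (lerp a b s) u = lerp a b (r + u * (s - r)).
Proof. case: a => [[a1 a2] a3]; case: b => [[b1 b2] b3]; rewrite /lerp /=. congr (_,_,_); ring. Qed.

Lemma midp_lerp a b : midp a b = lerp a b (1/2).
Proof. case: a => [[a1 a2] a3]; case: b => [[b1 b2] b3]; rewrite /lerp /midp /=. congr (_,_,_); field; done. Qed.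

Lemma lerp0 a b : lerp a b 0 = a.
Proof. case: a => [[a1 a2] a3]; case: b => [[b1 b2] b3]; rewrite /lerp /=. congr (_,_,_); ring. Qed.

Lemma lerp1 a b : lerp a b 1 = b.
Proof. case: a => [[a1 a2] a3]; case: b => [[b1 b2] b3]; rewrite /lerp /=. congr (_,_,_); ring. Qed.

Lemma lerp_sym a b r : lerp a b r = lerp b a (1 - r).
Proof. case: a => [[a1 a2] a3]; case: b => [[b1 b2] b3]; rewrite /lerp /=. congr (_,_,_); ring. Qed.

Lemma lerp_eq a b r s : r = s -> lerp a b r = lerp a b s.
Proof. by move=> ->. Qed.

Definition sv (s : nat) (f : face) : pt :=
  match s with 0 => f.1.1 | 1 => f.1.2 | _ => f.2 end.

Definition hasseg (f : face) (p q : pt) : Prop :=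
  (f.1.1 = p /\ f.1.2 = q) \/ (f.1.2 = p /\ f.2 = q) \/ (f.2 = p /\ f.1.1 = q).

Lemma child_first2 s h f : (s < 3)%N -> (h < 2)%N ->
  (child (2 * s + h) f).1.1 = lerp (sv s f) (sv (s.+1 %% 3) f) (h%:R / 2) /\
  (child (2 * s + h) f).1.2 = lerp (sv s f) (sv (s.+1 %% 3) f) ((h.+1)%:R / 2).
Proof.
case: f => [[x y] z].
case: s => [|[|[|s]]] // _; case: h => [|[|h]] // _ /=;
rewrite ?mul0r ?lerp0 ?divff ?lerp1 -?midp_lerp //.
Qed.

Lemma hasseg_mem f p q : hasseg f p q -> p \in verts f /\ q \in verts f.
Proof.
rewrite /verts !inE.
by case=> [[-> ->]|[[-> ->]|[-> ->]]]; rewrite !eqxx ?orbT.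
Qed.

Lemma hasseg_share f g p q : hasseg f p q -> p \in verts g -> q \in verts g ->
  share_side f g.
Proof.
rewrite /share_side /verts /=.
by case=> [[-> ->]|[[-> ->]|[-> ->]]] -> ->; rewrite ?addnA ?leq_addr ?addn1 // addnC ?addn1 ?leq_addr.
Qed.

End Geo.

End G1.
Import G1.

Module G2.
Import mathcomp.algebra_tactics.ring mathcomp.algebra_tactics.lra.
Import GRing.Theory Num.Theory.

Fixpoint descl (k w : nat) (f : face) : face :=
  match k with 0 => f | k'.+1 => child (w %% 6) (descl k' (w %/ 6) f) end.

Lemma face_of_split N k P w : w < 6 ^ k ->
  face_of (N + k) (P * 6 ^ k + w) = descl k w (face_of N P).
Proof.
elim: k w => [|k IH] w hw /=.
  have -> : w = 0 by move: hw; rewrite expn0; case: w.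
  by rewrite addn0 expn0 muln1 addn0.
rewrite addnS /=; congr child.
  by rewrite expnS mulnCA -modnDml modnMr add0n.
rewrite expnS mulnCA [6 * _]mulnC divnMDl // IH //.
by rewrite ltn_divLR // mulnC -expnS.
Qed.

Lemma descl_top k c w f : c < 6 -> w < 6 ^ k ->
  descl k.+1 (c * 6 ^ k + w) f = descl k w (child c f).
Proof.
elim: k w => [|k IH] w hc hw.
  have -> : w = 0 by move: hw; rewrite expn0; case: w.
  by rewrite /= muln1 addn0 modn_small // divn_small.
have e1 : (c * 6 ^ k.+1 + w) %% 6 = w %% 6.
  by rewrite expnS mulnCA -modnDml modnMr add0n.
have e2 : (c * 6 ^ k.+1 + w) %/ 6 = c * 6 ^ k + w %/ 6.
  by rewrite expnS mulnCA [6 * _]mulnC divnMDl.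
have hw' : w %/ 6 < 6 ^ k by rewrite ltn_divLR // mulnC -expnS.
change (child ((c * 6 ^ k.+1 + w) %% 6) (descl k.+1 ((c * 6 ^ k.+1 + w) %/ 6) f) =
  child (w %% 6) (descl k (w %/ 6) (child c f))).
by rewrite e1 e2 IH.
Qed.

Fixpoint off (m s t : nat) : nat :=
  match m with
  | 0 => 0
  | m'.+1 => (2 * s + t %/ 2 ^ m') * 6 ^ m' + off m' 0 (t %% 2 ^ m')
  end.

Lemma off_lt m s t : s < 3 -> t < 2 ^ m -> off m s t < 6 ^ m.
Proof.
elim: m s t => [|m IH] s t hs ht /=; first by rewrite expn0.
have h1 : t %/ 2 ^ m < 2 by rewrite ltn_divLR ?expn_gt0 // -expnS.
have h2 := IH 0 (t %% 2 ^ m) erefl (ltn_pmod _ (expn_gt0 2 m)).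
rewrite expnS.
have : 2 * s + t %/ 2 ^ m <= 5 by lia.
move=> h3. 
apply: (@leq_trans ((2 * s + t %/ 2 ^ m).+1 * 6 ^ m)).
  by rewrite mulSn addnC ltn_add2r.
rewrite leq_mul2r; apply/orP; right; lia.
Qed.

Lemma rat_id1 (h t' m : nat) :
  ((h%:R / 2 + t'%:R / (2 ^ m)%:R * (h.+1%:R / 2 - h%:R / 2)) : rat)%R =
  ((h * 2 ^ m + t')%:R / (2 ^ m.+1)%:R)%R.
Proof.
rewrite expnS natrM natrD natrM.
have h2 : ((2 ^ m)%:R : rat) != 0%R by rewrite pnatr_eq0 expn_eq0.
rewrite -[h.+1]addn1 natrD. field. by rewrite h2.
Qed.

Lemma gs_seg m s t f : s < 3 -> t < 2 ^ m ->
  hasseg (descl m (off m s t) f)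
    (lerp (sv s f) (sv (s.+1 %% 3) f) (t%:R / (2 ^ m)%:R))
    (lerp (sv s f) (sv (s.+1 %% 3) f) (t.+1%:R / (2 ^ m)%:R)).
Proof.
elim: m s t f => [|m IH] s t f hs ht.
  have -> : t = 0 by move: ht; rewrite expn0; case: t.
  rewrite /= expn0 !divr1 lerp0 lerp1.
  by case: s hs => [|[|[|s]]] // _; rewrite /hasseg /=; tauto.
set h := t %/ 2 ^ m. set t' := t %% 2 ^ m.
have hh : h < 2 by rewrite ltn_divLR ?expn_gt0 // -expnS.
have ht' : t' < 2 ^ m by rewrite ltn_pmod ?expn_gt0.
have ht2 : t = h * 2 ^ m + t' by rewrite /h /t' -divn_eq.
rewrite [off _ _ _]/= -/h -/t' descl_top; last by apply: off_lt.
  2: lia.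
have [e1 e2] := child_first2 s h f hs hh.
have := IH 0 t' (child (2 * s + h) f) erefl ht'.
rewrite /= e1 e2 !lerp_lerp.
rewrite rat_id1 -ht2.
rewrite (rat_id1 h t'.+1 m) (_ : h * 2 ^ m + t'.+1 = t.+1) //. by rewrite ht2 addnS.
Qed.

Definition sface (q m s t : nat) := q * 6 ^ m + off m s t.
Definition sa q m i t := sface (6 * q + i) m 1 t.
Definition sb q m i t := sface (6 * q + i.+1 %% 6) m 2 (2 ^ m - t.+1).

Lemma child_link i F : i < 6 ->
  (child (i.+1 %% 6) F).1.1 = (child i F).1.2 /\ (child (i.+1 %% 6) F).2 = (child i F).2.
Proof. by case: F => [[x y] z]; case: i => [|[|[|[|[|[|i]]]]]]. Qed.

Lemma sface_div q m s t : s < 3 -> t < 2 ^ m -> sface q m s t %/ 6 ^ m = q.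
Proof. move=> hs ht; rewrite /sface divnMDl ?expn_gt0 // divn_small ?addn0 //; exact: off_lt. Qed.

Lemma sface_lt q m s t : s < 3 -> t < 2 ^ m -> sface q m s t < q.+1 * 6 ^ m.
Proof. move=> hs ht; rewrite /sface mulSn addnC ltn_add2r; exact: off_lt. Qed.

Lemma face_of_sface q i m s t : i < 6 -> s < 3 -> t < 2 ^ m ->
  face_of (q.+1 + m) (sface (6 * q + i) m s t) = descl m (off m s t) (child i (face_of q q)).
Proof.
move=> hi hs ht; rewrite /sface face_of_split /=; last exact: off_lt.
by rewrite [6 * q]mulnC modnMDl modn_small // divnMDl // divn_small // addn0.
Qed.

Lemma rat_id2 (t m : nat) : t < 2 ^ m ->
  (1 - (2 ^ m - t.+1)%:R / (2 ^ m)%:R = t.+1%:R / (2 ^ m)%:R :> rat)%R /\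
  (1 - (2 ^ m - t.+1).+1%:R / (2 ^ m)%:R = t%:R / (2 ^ m)%:R :> rat)%R.
Proof.
move=> ht.
have h2 : ((2 ^ m)%:R : rat) != 0%R by rewrite pnatr_eq0 expn_eq0.
have e : (2 ^ m - t.+1).+1 = 2 ^ m - t by lia.
rewrite e !natrB //; last by apply: ltnW.
split; field; by rewrite h2.
Qed.

Lemma spoke_adj q m i t : i < 6 -> t < 2 ^ m ->
  hex_adj (sa q m i t) (sb q m i t) /\ hex_adj (sb q m i t) (sa q m i t).
Proof.
move=> hi ht.
have ht2 : 2 ^ m - t.+1 < 2 ^ m by lia.
have hi' : i.+1 %% 6 < 6 by rewrite ltn_pmod.
set F := face_of q q.
have A1 := face_of_sface q i m 1 t hi erefl ht.
have B1 := face_of_sface q (i.+1 %% 6) m 2 (2 ^ m - t.+1) hi' erefl ht2.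
have [l1 l2] := child_link i F hi.
have hA := gs_seg m 1 t (child i F) erefl ht.
have hB := gs_seg m 2 (2 ^ m - t.+1) (child (i.+1 %% 6) F) erefl ht2.
rewrite /= l1 l2 in hB hA.
rewrite lerp_sym [X in hasseg _ _ X]lerp_sym in hB.
have [r1 r2] := rat_id2 t m ht.
rewrite r1 r2 in hB.
rewrite -A1 in hA; rewrite -B1 in hB.
have [hA1 hA2] := hasseg_mem _ _ _ hA.
have [hB1 hB2] := hasseg_mem _ _ _ hB.
have neq : sa q m i t <> sb q m i t.
  move=> e; have := congr1 (fun x => x %/ 6 ^ m) e.
  rewrite /sa /sb !sface_div // => e2; lia.
have hq : q < 6 ^ q by apply: ltn_expl.
have hP : forall P, P < 6 * q.+1 -> P.+1 * 6 ^ m <= 6 ^ (q.+1 + m).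
  move=> P hP; rewrite expnD leq_mul2r expnS; apply/orP; right; lia.
have lt1 : sa q m i t < 6 ^ (q.+1 + m).
  apply: (leq_trans (sface_lt (6 * q + i) m 1 t erefl ht)); apply: hP; lia.
have lt2 : sb q m i t < 6 ^ (q.+1 + m).
  apply: (leq_trans (sface_lt (6 * q + i.+1 %% 6) m 2 _ erefl ht2)); apply: hP; lia.
split; split.
- exact: neq.
- exists (q.+1 + m); split; [exact: lt1 | exact: lt2 | exact: (hasseg_share _ _ _ _ hA hB2 hB1)].
- by move=> e; apply: neq.
- exists (q.+1 + m); split; [exact: lt2 | exact: lt1 | exact: (hasseg_share _ _ _ _ hB hA2 hA1)].
Qed.

End G2.
Import G2.

Module G3.
Import mathcomp.algebra_tactics.ring mathcomp.algebra_tactics.lra.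
Import GRing.Theory Num.Theory.

Section Neg.
Local Open Scope ring_scope.

Definition Bl (f : face) (q : pt) : pt :=
 (q.1.1 * f.1.1.1.1 + q.1.2 * f.1.2.1.1 + q.2 * f.2.1.1,
  q.1.1 * f.1.1.1.2 + q.1.2 * f.1.2.1.2 + q.2 * f.2.1.2,
  q.1.1 * f.1.1.2 + q.1.2 * f.1.2.2 + q.2 * f.2.2).

Definition mapf (g : pt -> pt) (f : face) : face := (g f.1.1, g f.1.2, g f.2).

Lemma Bl_midp f p q : Bl f (midp p q) = midp (Bl f p) (Bl f q).
Proof.
case: f => [[[[x1 x2] x3] [[y1 y2] y3]] [[z1 z2] z3]].
case: p => [[p1 p2] p3]; case: q => [[q1 q2] q3].
rewrite /Bl /midp /=; congr (_,_,_); ring.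
Qed.

Lemma Bl_baryc f p q r : Bl f (baryc p q r) = baryc (Bl f p) (Bl f q) (Bl f r).
Proof.
case: f => [[[[x1 x2] x3] [[y1 y2] y3]] [[z1 z2] z3]].
case: p => [[p1 p2] p3]; case: q => [[q1 q2] q3]; case: r => [[r1 r2] r3].
rewrite /Bl /baryc /=; congr (_,_,_); ring.
Qed.

Lemma child_map F i g : child i (mapf (Bl F) g) = mapf (Bl F) (child i g).
Proof.
case: g => [[x y] z].
by case: i => [|[|[|[|[|i]]]]]; rewrite /mapf /= ?Bl_midp ?Bl_baryc.
Qed.

Lemma descl_map F k w g : descl k w (mapf (Bl F) g) = mapf (Bl F) (descl k w g).
Proof. by elim: k w => [|k IH] w //=; rewrite IH child_map. Qed.

Definition T0 : face := (v0, v1, v2).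

Lemma mapf_T0 F : mapf (Bl F) T0 = F.
Proof.
case: F => [[[[x1 x2] x3] [[y1 y2] y3]] [[z1 z2] z3]].
by rewrite /mapf /Bl /=; congr (_,_,_); congr (_,_,_); ring.
Qed.

Definition allv (P : pt -> Prop) (f : face) := P f.1.1 /\ P f.1.2 /\ P f.2.

Lemma allv_descl (P : pt -> Prop) k w f :
  (forall p q, P p -> P q -> P (midp p q)) ->
  (forall p q r, P p -> P q -> P r -> P (baryc p q r)) ->
  allv P f -> allv P (descl k w f).
Proof.
move=> hm hb; elim: k w f => [|k IH] w f //= hf.
have [h1 [h2 h3]] := IH (w %/ 6)%N f hf.
have hc := hb _ _ _ h1 h2 h3.
move: hc h1 h2 h3; case: (descl k (w %/ 6)%N f) => [[x y] z] /= hc h1 h2 h3.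
case: (w %% 6)%N => [|[|[|[|[|i]]]]]; rewrite /allv /=; repeat split; solve [done | by apply: hm].
Qed.

Definition zp : pt := (0, 0, 0).
Definition indep (f : face) := forall q, Bl f q = zp -> q = zp.

Lemma indep_T0 : indep T0.
Proof.
move=> [[a b] c]; rewrite /Bl /T0 /= => [[h1 h2 h3]].
rewrite /zp; congr (_,_,_); lra.
Qed.

Lemma indep_child i f : indep f -> indep (child i f).
Proof.
case: f => [[[[x1 x2] x3] [[y1 y2] y3]] [[z1 z2] z3]] hf [[a b] c] h.
case: i h => [|[|[|[|[|i]]]]] /=; rewrite /Bl /zp /= => -[h1 h2 h3].
- have := hf (a + b/2%:R + c/3%:R, b/2%:R + c/3%:R, c/3%:R); rewrite /Bl /zp /= => H.
  have [e1 e2 e3] : (a + b/2%:R + c/3%:R, b/2%:R + c/3%:R, c/3%:R) = (0, 0, 0) by apply: H; congr (_,_,_); lra.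
  congr (_,_,_); lra.
- have := hf (a/2%:R + c/3%:R, a/2%:R + b + c/3%:R, c/3%:R); rewrite /Bl /zp /= => H.
  have [e1 e2 e3] : (a/2%:R + c/3%:R, a/2%:R + b + c/3%:R, c/3%:R) = (0, 0, 0) by apply: H; congr (_,_,_); lra.
  congr (_,_,_); lra.
- have := hf (c/3%:R, a + b/2%:R + c/3%:R, b/2%:R + c/3%:R); rewrite /Bl /zp /= => H.
  have [e1 e2 e3] : (c/3%:R, a + b/2%:R + c/3%:R, b/2%:R + c/3%:R) = (0, 0, 0) by apply: H; congr (_,_,_); lra.
  congr (_,_,_); lra.
- have := hf (c/3%:R, a/2%:R + c/3%:R, a/2%:R + b + c/3%:R); rewrite /Bl /zp /= => H.
  have [e1 e2 e3] : (c/3%:R, a/2%:R + c/3%:R, a/2%:R + b + c/3%:R) = (0, 0, 0) by apply: H; congr (_,_,_); lra.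
  congr (_,_,_); lra.
- have := hf (b/2%:R + c/3%:R, c/3%:R, a + b/2%:R + c/3%:R); rewrite /Bl /zp /= => H.
  have [e1 e2 e3] : (b/2%:R + c/3%:R, c/3%:R, a + b/2%:R + c/3%:R) = (0, 0, 0) by apply: H; congr (_,_,_); lra.
  congr (_,_,_); lra.
- have := hf (a/2%:R + b + c/3%:R, c/3%:R, a/2%:R + c/3%:R); rewrite /Bl /zp /= => H.
  have [e1 e2 e3] : (a/2%:R + b + c/3%:R, c/3%:R, a/2%:R + c/3%:R) = (0, 0, 0) by apply: H; congr (_,_,_); lra.
  congr (_,_,_); lra.
Qed.


Lemma indep_descl k w f : indep f -> indep (descl k w f).
Proof. by elim: k w => [|k IH] w //= hf; apply: indep_child; apply: IH. Qed.

Lemma indep_face_of n v : indep (face_of n v).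
Proof. elim: n v => [|n IH] v /=; [exact: indep_T0 | exact: indep_child]. Qed.

Lemma Bl_inj F p q : indep F -> Bl F p = Bl F q -> p = q.
Proof.
case: F => [[[[x1 x2] x3] [[y1 y2] y3]] [[z1 z2] z3]].
case: p => [[p1 p2] p3]; case: q => [[q1 q2] q3] hF.
rewrite /Bl /= => -[e1 e2 e3].
have := hF (p1 - q1, p2 - q2, p3 - q3).
rewrite /Bl /zp /= => H.
have [f1 f2 f3] : (p1 - q1, p2 - q2, p3 - q3) = (0, 0, 0).
  by apply: H; congr (_,_,_); lra.
congr (_,_,_); lra.
Qed.

Lemma indep_distinct F : indep F ->
  [/\ F.1.1 <> F.1.2, F.1.2 <> F.2 & F.2 <> F.1.1].
Proof.
case: F => [[[[x1 x2] x3] [[y1 y2] y3]] [[z1 z2] z3]] hF /=.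
split => -[e1 e2 e3].
- have := hF (1, -1, 0); rewrite /Bl /zp /= => H.
  have E : ((1 : rat), (-1 : rat), (0 : rat)) = (0, 0, 0).
    by apply: H; congr (_,_,_); lra.
  have := congr1 (fun x : pt => x.1.1) E; rewrite /= => h; lra.
- have := hF (0, 1, -1); rewrite /Bl /zp /= => H.
  have E : ((0 : rat), (1 : rat), (-1 : rat)) = (0, 0, 0).
    by apply: H; congr (_,_,_); lra.
  have := congr1 (fun x : pt => x.1.2) E; rewrite /= => h; lra.
- have := hF (-1, 0, 1); rewrite /Bl /zp /= => H.
  have E : ((-1 : rat), (0 : rat), (1 : rat)) = (0, 0, 0).
    by apply: H; congr (_,_,_); lra.
  have := congr1 (fun x : pt => x.2) E; rewrite /= => h; lra.
Qed.

Definition cc0 (q : pt) : Prop :=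
  q.1.1 + q.1.2 + q.2 = 1 /\ 0 <= q.2 /\ 0 <= 2%:R * q.1.2 - 5%:R * q.2 /\
  0 <= q.1.1 - 3%:R * q.1.2 + 2%:R * q.2.

Definition chd (d : nat) (q : pt) : Prop :=
  q.1.1 + q.1.2 + q.2 = 1 /\
  match d with
  | 1 => q.1.1 <= q.1.2 /\ q.2 <= q.1.1
  | 2 => q.2 <= q.1.2 /\ q.1.1 <= q.2
  | 3 => q.1.2 <= q.2 /\ q.1.1 <= q.1.2
  | 4 => q.1.1 <= q.2 /\ q.1.2 <= q.1.1
  | _ => q.2 <= q.1.1 /\ q.1.2 <= q.2
  end.

Lemma cc0_midp p q : cc0 p -> cc0 q -> cc0 (midp p q).
Proof.
case: p => [[p1 p2] p3]; case: q => [[q1 q2] q3]; rewrite /cc0 /midp /=.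
move=> [? [? [? ?]]] [? [? [? ?]]]; repeat split; lra.
Qed.

Lemma cc0_baryc p q r : cc0 p -> cc0 q -> cc0 r -> cc0 (baryc p q r).
Proof.
case: p => [[p1 p2] p3]; case: q => [[q1 q2] q3]; case: r => [[r1 r2] r3].
rewrite /cc0 /baryc /=.
move=> [? [? [? ?]]] [? [? [? ?]]] [? [? [? ?]]]; repeat split; lra.
Qed.

Lemma chd_midp d p q : chd d p -> chd d q -> chd d (midp p q).
Proof.
case: p => [[p1 p2] p3]; case: q => [[q1 q2] q3]; rewrite /chd /midp /=.
by case: d => [|[|[|[|[|d]]]]] [? [? ?]] [? [? ?]]; repeat split; lra.
Qed.

Lemma chd_baryc d p q r : chd d p -> chd d q -> chd d r -> chd d (baryc p q r).
Proof.
case: p => [[p1 p2] p3]; case: q => [[q1 q2] q3]; case: r => [[r1 r2] r3].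
rewrite /chd /baryc /=.
by case: d => [|[|[|[|[|d]]]]] [? [? ?]] [? [? ?]] [? [? ?]]; repeat split; lra.
Qed.

Definition QP (F : face) (Q : pt -> Prop) (p : pt) := exists q, p = Bl F q /\ Q q.

Lemma QP_midp F (Q : pt -> Prop) : (forall p q, Q p -> Q q -> Q (midp p q)) ->
  forall p q, QP F Q p -> QP F Q q -> QP F Q (midp p q).
Proof.
move=> hQ p q [p' [-> hp]] [q' [-> hq]]; exists (midp p' q'); split; last exact: hQ.
by rewrite Bl_midp.
Qed.

Lemma QP_baryc F (Q : pt -> Prop) : (forall p q r, Q p -> Q q -> Q r -> Q (baryc p q r)) ->
  forall p q r, QP F Q p -> QP F Q q -> QP F Q r -> QP F Q (baryc p q r).
Proof.
move=> hQ p q r [p' [-> hp]] [q' [-> hq]] [r' [-> hr]]; exists (baryc p' q' r').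
split; last exact: hQ. by rewrite Bl_baryc.
Qed.

Lemma allv_mapf F (Q : pt -> Prop) g : allv Q g -> allv (QP F Q) (mapf (Bl F) g).
Proof.
case: g => [[x y] z] [h1 [h2 h3]]; rewrite /allv /mapf /=.
split; first by exists x. split; first by exists y. by exists z.
Qed.

Lemma allv_cc0 R : allv (QP R cc0) (child 0 (child 0 R)).
Proof.
rewrite -[R in child 0 (child 0 R)]mapf_T0 !child_map; apply: allv_mapf.
rewrite /allv /cc0 /T0 /= /midp /baryc /v0 /v1 /v2 /=.
repeat split; lra.
Qed.

Lemma allv_chd R d : (0 < d < 6)%N -> allv (QP R (chd d)) (child d R).
Proof.
move=> hd; rewrite -[R in child d R]mapf_T0 child_map; apply: allv_mapf.
rewrite /allv /chd /T0 /midp /baryc /v0 /v1 /v2.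
case: d hd => [|[|[|[|[|[|d]]]]]] // _ /=; repeat split; lra.
Qed.

Lemma cc0_chd d q : (0 < d < 6)%N -> cc0 q -> chd d q -> q = v0.
Proof.
case: q => [[a b] c]; rewrite /cc0 /chd /v0 /=.
case: d => [|[|[|[|[|[|d]]]]]] // _ [h1 [h2 [h3 h4]]] [h5 [h6 h7]];
  try (exfalso; lra).
congr (_,_,_); lra.
Qed.

Lemma no_share R K K' u w d : indep R -> (0 < d < 6)%N ->
  ~ share_side (descl K' u (child 0 (child 0 R))) (descl K w (child d R)).
Proof.
move=> hR hd.
set Fu := descl K' u _; set Fv := descl K w _.
have hu : allv (QP R cc0) Fu.
  apply: allv_descl; [exact: QP_midp cc0_midp | exact: QP_baryc cc0_baryc | exact: allv_cc0].
have hv : allv (QP R (chd d)) Fv.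
  apply: allv_descl; [exact: QP_midp (chd_midp d) | exact: QP_baryc (chd_baryc d) | exact: allv_chd].
have key : forall p, QP R cc0 p -> p \in verts Fv -> p = R.1.1.
  move=> p [q1 [-> h1]]; rewrite /verts !inE.
  have [hv1 [hv2 hv3]] := hv.
  have H : forall r, QP R (chd d) r -> Bl R q1 = r -> Bl R q1 = R.1.1.
    move=> r [q2 [-> h2]] e; have e' := Bl_inj R q1 q2 hR e.
    rewrite e' in h1 *; rewrite (cc0_chd d q2 hd h1 h2).
    by rewrite -[in RHS](mapf_T0 R).
  by case/or3P => /eqP e; [apply: (H _ hv1) | apply: (H _ hv2) | apply: (H _ hv3)].
have [d1 d2 d3] := indep_distinct _ (indep_descl K' u _ (indep_child 0 _ (indep_child 0 _ hR))).
have [hu1 [hu2 hu3]] := hu.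
rewrite /share_side /verts /= -/Fu.
case e1: (Fu.1.1 \in verts Fv); case e2: (Fu.1.2 \in verts Fv);
  case e3: (Fu.2 \in verts Fv) => //=.
- by move=> _; apply: d1; rewrite (key _ hu1 e1) (key _ hu2 e2).
- by move=> _; apply: d1; rewrite (key _ hu1 e1) (key _ hu2 e2).
- by move=> _; apply: d3; rewrite (key _ hu1 e1) (key _ hu3 e3).
- by move=> _; apply: d2; rewrite (key _ hu2 e2) (key _ hu3 e3).
Qed.

End Neg.

Lemma nbr_bound n0 u v : u < 6 ^ n0 -> hex_adj u v -> v < 6 ^ n0.+1.
Proof.
move=> hu [_ [n [hun hvn hs]]].
rewrite ltnNge; apply/negP => hv.
have v0 : 0 < v by apply: leq_trans hv; rewrite expn_gt0.
set K := trunc_log 6 v.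
have hK1 : 6 ^ K <= v by apply: trunc_logP.
have hK2 : v < 6 ^ K.+1 by apply: trunc_log_ltn.
have hKn0 : n0.+1 < K.+1.
  by rewrite -(ltn_exp2l _ _ (erefl : 1 < 6)); apply: leq_ltn_trans hK2.
have hKn : K < n.
  by rewrite -(ltn_exp2l _ _ (erefl : 1 < 6)); apply: leq_ltn_trans hvn.
move: hKn0 hK1 hK2 hs hKn; case: K => [|K'] // hKn0 hK1 hK2 hs hKn.
set d := v %/ 6 ^ K'.+1; set w := v %% 6 ^ K'.+1.
have hv2 : v = d * 6 ^ K'.+1 + w by rewrite /d /w -divn_eq.
have hd : 0 < d < 6.
  apply/andP; split; first by rewrite divn_gt0 ?expn_gt0.
  by rewrite ltn_divLR ?expn_gt0 // -expnSr.
have hw : w < 6 ^ K'.+1 by rewrite ltn_pmod ?expn_gt0.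
have en : n = (n - K'.+2) + K'.+2 by rewrite subnK.
set R := face_of (n - K'.+2) 0.
have fv : face_of n v = descl K'.+1 w (child d R).
  have := face_of_split (n - K'.+2) K'.+2 0 v hK2; rewrite mul0n add0n -en => ->.
  by rewrite {1}hv2 descl_top //; case/andP: hd.
have hu' : u < 6 ^ K' by apply: leq_trans hu _; rewrite leq_exp2l //; lia.
have hu1 : u < 6 ^ K'.+1 by apply: leq_trans hu' _; rewrite leq_exp2l // leqnSn.
have hu2 : u < 6 ^ K'.+2 by apply: leq_trans hu' _; rewrite leq_exp2l //; lia.
have fu : face_of n u = descl K' u (child 0 (child 0 R)).
  have := face_of_split (n - K'.+2) K'.+2 0 u hu2; rewrite mul0n add0n -en => ->.
  have := descl_top K'.+1 0 u R erefl hu1; rewrite mul0n add0n => ->.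
  have := descl_top K' 0 u (child 0 R) erefl hu'; rewrite mul0n add0n => ->.
  by [].
rewrite fu fv in hs.
exact: (no_share R K'.+1 K' u w d (indep_face_of _ _) hd hs).
Qed.

End G3.
Import G3.

Module C1.

Definition adjb (a b : nat) : bool :=
  if excluded_middle_informative (hex_adj a b) then true else false.

Lemma adjbP a b : reflect (hex_adj a b) (adjb a b).
Proof. by rewrite /adjb; case: excluded_middle_informative => h; constructor. Qed.

Lemma count_sub (T : eqType) (p : pred T) s1 s2 :
  uniq s1 -> (forall x, x \in s1 -> p x -> x \in s2) -> count p s1 <= count p s2.
Proof.
move=> u h; rewrite -!size_filter; apply: uniq_leq_size; first exact: filter_uniq.
by move=> x; rewrite !mem_filter => /andP[px xs]; rewrite px h.
Qed.

Lemma sum_count (T : Type) (p : pred T) (f : nat -> T) s :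
  \sum_(x <- s) (p (f x) : nat) = count p (map f s).
Proof. by elim: s => [|x s IH]; rewrite ?big_nil ?big_cons //= IH. Qed.

Lemma off_inj m s t t' : s < 3 -> t < 2 ^ m -> t' < 2 ^ m -> off m s t = off m s t' -> t = t'.
Proof.
elim: m s t t' => [|m IH] s t t' hs ht ht' /=.
  by move: ht ht'; rewrite expn0; case: t => //; case: t'.
move=> e.
have r1 := off_lt m 0 (t %% 2 ^ m) erefl (ltn_pmod _ (expn_gt0 2 m)).
have r2 := off_lt m 0 (t' %% 2 ^ m) erefl (ltn_pmod _ (expn_gt0 2 m)).
have e1 := congr1 (fun x => x %/ 6 ^ m) e.
have e2 := congr1 (fun x => x %% 6 ^ m) e.
rewrite /= !divnMDl ?expn_gt0 // (divn_small r1) (divn_small r2) !addn0 in e1.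
rewrite /= !modnMDl (modn_small r1) (modn_small r2) in e2.
have e3 : t %% 2 ^ m = t' %% 2 ^ m.
  apply: (IH 0) => //; exact: ltn_pmod (expn_gt0 2 m).
rewrite (divn_eq t (2 ^ m)) (divn_eq t' (2 ^ m)) e3; congr (_ * _ + _); lia.
Qed.

Section Comb.
Variable J : pred nat.

Definition Pb (e : nat * nat) : bool := J e.1 && ~~ J e.2 && adjb e.1 e.2.
Definition cellL q m := iota (q * 6 ^ m) (6 ^ m).
Definition prs (s t : seq nat) := [seq (a, b) | a <- s, b <- t].
Definition SS s t := count Pb (prs s t).
Definition bdc q m := SS (cellL q m) (cellL q m).
Definition cnt q m s := \sum_(0 <= t < 2 ^ m) (J (sface q m s t) : nat).
Definition cross q m i := \sum_(0 <= t < 2 ^ m) (J (sa q m i t) != J (sb q m i t) : nat).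

Lemma SS_catl s1 s2 t : SS (s1 ++ s2) t = SS s1 t + SS s2 t.
Proof. by rewrite /SS /prs allpairs_cat count_cat. Qed.

Lemma SS_catr s t1 t2 : SS s (t1 ++ t2) = SS s t1 + SS s t2.
Proof.
rewrite /SS /prs; elim: s => [|x s IH] //=.
rewrite !count_cat map_cat count_cat IH; lia.
Qed.

Lemma cellP x q m : (x \in cellL q m) = (x %/ 6 ^ m == q).
Proof.
have hN : 0 < 6 ^ m by rewrite expn_gt0.
rewrite mem_iota; apply/andP/eqP => [[h1 h2]|<-].
  have -> : x = q * 6 ^ m + (x - q * 6 ^ m) by rewrite subnKC.
  rewrite divnMDl // divn_small ?addn0 //; lia.
split; first by rewrite leq_trunc_div.
by rewrite addnC -mulSn ltn_ceil.
Qed.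

Lemma sface_cell q m s t : s < 3 -> t < 2 ^ m -> sface q m s t \in cellL q m.
Proof. by move=> hs ht; rewrite cellP sface_div. Qed.

Lemma cellL_split q m : cellL q m.+1 =
  cellL (6 * q + 0) m ++ cellL (6 * q + 1) m ++ cellL (6 * q + 2) m ++
  cellL (6 * q + 3) m ++ cellL (6 * q + 4) m ++ cellL (6 * q + 5) m.
Proof.
rewrite /cellL.
have -> : 6 ^ m.+1 = 6 ^ m + (6 ^ m + (6 ^ m + (6 ^ m + (6 ^ m + 6 ^ m)))).
  by rewrite expnS; lia.
rewrite !iotaD; congr (iota _ _ ++ iota _ _ ++ iota _ _ ++ iota _ _ ++ iota _ _ ++ iota _ _);
  nia.
Qed.

End Comb.

End C1.
Import C1.

Module C2.

Section Comb2.
Variable J : pred nat.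
Local Notation cnt := (cnt J).
Local Notation bdc := (bdc J).
Local Notation SS := (SS J).
Local Notation cross := (cross J).

Lemma cnt_split q m s a b : s < 3 -> a = 6 * q + 2 * s -> b = (6 * q + 2 * s).+1 ->
  cnt q m.+1 s = cnt a m 0 + cnt b m 0.
Proof.
move=> hs -> ->; rewrite /C1.cnt.
have h2 : 0 < 2 ^ m by rewrite expn_gt0.
rewrite (@big_cat_nat _ _ _ (2 ^ m)) //=; last by rewrite expnS; lia.
congr (_ + _).
  apply: eq_big_nat => t /andP[_ ht]; congr (nat_of_bool (J _)).
  rewrite /sface /= divn_small // modn_small // addn0 expnS; nia.
rewrite -{1}[2 ^ m]add0n big_addn.
have -> : 2 ^ m.+1 - 2 ^ m = 2 ^ m by rewrite expnS; lia.
apply: eq_big_nat => t /andP[_ ht]; congr (nat_of_bool (J _)).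
have e1 : (t + 2 ^ m) %/ 2 ^ m = 1 by rewrite divnDr ?dvdnn // divnn h2 divn_small.
have e2 : (t + 2 ^ m) %% 2 ^ m = t by rewrite modnDr modn_small.
rewrite /sface /= e1 e2 expnS; nia.
Qed.

Lemma cnt_rev q m : cnt q m 2 = \sum_(0 <= t < 2 ^ m) (J (sface q m 2 (2 ^ m - t.+1)) : nat).
Proof. by rewrite /C1.cnt big_nat_rev /= add0n. Qed.

Lemma spoke1 q m i b : b = 6 * q + i.+1 %% 6 ->
  cnt (6 * q + i) m 1 <= cnt b m 2 + cross q m i.
Proof.
move=> ->; rewrite cnt_rev /C1.cross -big_split /=.
apply: leq_sum => t _; rewrite /sa /sb.
by case: (J (sface (6 * q + i) m 1 t)); case: (J (sface (6 * q + i.+1 %% 6) m 2 (2 ^ m - t.+1))).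
Qed.

Lemma spoke2 q m i b : b = 6 * q + i.+1 %% 6 ->
  cnt b m 2 <= cnt (6 * q + i) m 1 + cross q m i.
Proof.
move=> ->; rewrite cnt_rev /C1.cross /C1.cnt -big_split /=.
apply: leq_sum => t _; rewrite /sa /sb.
by case: (J (sface (6 * q + i) m 1 t)); case: (J (sface (6 * q + i.+1 %% 6) m 2 (2 ^ m - t.+1))).
Qed.

Lemma cross_le q m i b : i < 6 -> b = 6 * q + i.+1 %% 6 ->
  cross q m i <= SS (cellL (6 * q + i) m) (cellL b m) + SS (cellL b m) (cellL (6 * q + i) m).
Proof.
move=> hi eb.
pose A t := (sa q m i t, sb q m i t).
pose B t := (sb q m i t, sa q m i t).
apply: (@leq_trans (count (Pb J) (map A (index_iota 0 (2 ^ m))) + count (Pb J) (map B (index_iota 0 (2 ^ m))))).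
  rewrite -!sum_count /C1.cross -big_split /= big_seq [X in _ <= X]big_seq.
  apply: leq_sum => t; rewrite mem_index_iota => /andP[_ ht].
  have [a1 a2] := spoke_adj q m i t hi ht.
  rewrite /Pb /A /B /= (introT (adjbP _ _) a1) (introT (adjbP _ _) a2).
  by case: (J (sa q m i t)); case: (J (sb q m i t)).
rewrite /index_iota subn0.
have injA : {in iota 0 (2 ^ m) &, injective A}.
  move=> t t'; rewrite !mem_iota !add0n => /andP[_ ht] /andP[_ ht'] [e _].
  by apply: (off_inj m 1) => //; move: e; rewrite /sa /sface => /eqP; rewrite eqn_add2l => /eqP.
have injB : {in iota 0 (2 ^ m) &, injective B}.
  move=> t t'; rewrite !mem_iota !add0n => /andP[_ ht] /andP[_ ht'] [_ e].
  by apply: (off_inj m 1) => //; move: e; rewrite /sa /sface => /eqP; rewrite eqn_add2l => /eqP.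
have hb' : b = sface b m 0 0 %/ 6 ^ m by rewrite sface_div ?expn_gt0.
apply: leq_add; apply: count_sub.
- by rewrite map_inj_in_uniq ?iota_uniq.
- move=> x /mapP[t]; rewrite mem_iota add0n => /andP[_ ht] -> _.
  apply: allpairs_f; rewrite /sa /sb ?eb; apply: sface_cell => //; lia.
- by rewrite map_inj_in_uniq ?iota_uniq.
- move=> x /mapP[t]; rewrite mem_iota add0n => /andP[_ ht] -> _.
  apply: allpairs_f; rewrite /sa /sb ?eb; apply: sface_cell => //; lia.
Qed.


Lemma bdc_ge q m :
  bdc (6 * q + 0) m + bdc (6 * q + 1) m + bdc (6 * q + 2) m + bdc (6 * q + 3) m +
  bdc (6 * q + 4) m + bdc (6 * q + 5) m +
  (cross q m 0 + cross q m 1 + cross q m 2 + cross q m 3 + cross q m 4 + cross q m 5)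
  <= bdc q m.+1.
Proof.
have c0 := cross_le q m 0 (6 * q + 1) erefl erefl.
have c1 := cross_le q m 1 (6 * q + 2) erefl erefl.
have c2 := cross_le q m 2 (6 * q + 3) erefl erefl.
have c3 := cross_le q m 3 (6 * q + 4) erefl erefl.
have c4 := cross_le q m 4 (6 * q + 5) erefl erefl.
have c5 := cross_le q m 5 (6 * q + 0) erefl erefl.
rewrite /= in c0 c1 c2 c3 c4 c5.
rewrite /C1.bdc cellL_split !SS_catl !SS_catr.
lia.
Qed.

Lemma cut m q s1 s2 : s1 < 3 -> s2 < 3 -> cnt q m s1 <= cnt q m s2 + bdc q m.
Proof.
elim: m q s1 s2 => [|m IH] q s1 s2 hs1 hs2.
  by rewrite /C1.cnt expn0 !big_nat1 /sface /= leq_addr.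
have i0_01 := IH (6 * q + 0) 0 1 erefl erefl.
have i0_02 := IH (6 * q + 0) 0 2 erefl erefl.
have i0_10 := IH (6 * q + 0) 1 0 erefl erefl.
have i0_12 := IH (6 * q + 0) 1 2 erefl erefl.
have i0_20 := IH (6 * q + 0) 2 0 erefl erefl.
have i0_21 := IH (6 * q + 0) 2 1 erefl erefl.
have i1_01 := IH (6 * q + 1) 0 1 erefl erefl.
have i1_02 := IH (6 * q + 1) 0 2 erefl erefl.
have i1_10 := IH (6 * q + 1) 1 0 erefl erefl.
have i1_12 := IH (6 * q + 1) 1 2 erefl erefl.
have i1_20 := IH (6 * q + 1) 2 0 erefl erefl.
have i1_21 := IH (6 * q + 1) 2 1 erefl erefl.
have i2_01 := IH (6 * q + 2) 0 1 erefl erefl.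
have i2_02 := IH (6 * q + 2) 0 2 erefl erefl.
have i2_10 := IH (6 * q + 2) 1 0 erefl erefl.
have i2_12 := IH (6 * q + 2) 1 2 erefl erefl.
have i2_20 := IH (6 * q + 2) 2 0 erefl erefl.
have i2_21 := IH (6 * q + 2) 2 1 erefl erefl.
have i3_01 := IH (6 * q + 3) 0 1 erefl erefl.
have i3_02 := IH (6 * q + 3) 0 2 erefl erefl.
have i3_10 := IH (6 * q + 3) 1 0 erefl erefl.
have i3_12 := IH (6 * q + 3) 1 2 erefl erefl.
have i3_20 := IH (6 * q + 3) 2 0 erefl erefl.
have i3_21 := IH (6 * q + 3) 2 1 erefl erefl.
have i4_01 := IH (6 * q + 4) 0 1 erefl erefl.
have i4_02 := IH (6 * q + 4) 0 2 erefl erefl.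
have i4_10 := IH (6 * q + 4) 1 0 erefl erefl.
have i4_12 := IH (6 * q + 4) 1 2 erefl erefl.
have i4_20 := IH (6 * q + 4) 2 0 erefl erefl.
have i4_21 := IH (6 * q + 4) 2 1 erefl erefl.
have i5_01 := IH (6 * q + 5) 0 1 erefl erefl.
have i5_02 := IH (6 * q + 5) 0 2 erefl erefl.
have i5_10 := IH (6 * q + 5) 1 0 erefl erefl.
have i5_12 := IH (6 * q + 5) 1 2 erefl erefl.
have i5_20 := IH (6 * q + 5) 2 0 erefl erefl.
have i5_21 := IH (6 * q + 5) 2 1 erefl erefl.
have sp1_0 := spoke1 q m 0 (6 * q + 1) erefl.
have sp2_0 := spoke2 q m 0 (6 * q + 1) erefl.
have sp1_1 := spoke1 q m 1 (6 * q + 2) erefl.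
have sp2_1 := spoke2 q m 1 (6 * q + 2) erefl.
have sp1_2 := spoke1 q m 2 (6 * q + 3) erefl.
have sp2_2 := spoke2 q m 2 (6 * q + 3) erefl.
have sp1_3 := spoke1 q m 3 (6 * q + 4) erefl.
have sp2_3 := spoke2 q m 3 (6 * q + 4) erefl.
have sp1_4 := spoke1 q m 4 (6 * q + 5) erefl.
have sp2_4 := spoke2 q m 4 (6 * q + 5) erefl.
have sp1_5 := spoke1 q m 5 (6 * q + 0) erefl.
have sp2_5 := spoke2 q m 5 (6 * q + 0) erefl.
have bg := bdc_ge q m.
case: s1 hs1 => [|[|[|//]]] _; case: s2 hs2 => [|[|[|//]]] _; try by rewrite leq_addr.
all: rewrite ?(cnt_split q m 0 (6 * q + 0) (6 * q + 1)) // ?(cnt_split q m 1 (6 * q + 2) (6 * q + 3)) //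
  ?(cnt_split q m 2 (6 * q + 4) (6 * q + 5)) //; lia.
Qed.

Lemma route m q i b : i < 6 -> b < 3 ->
  cnt (6 * q + i) m (if i./2 == b then 0 else 1) + bdc (6 * q + i) m <= cnt q m.+1 b + bdc q m.+1.
Proof.
move=> hi hb.
have i0_01 := cut m (6 * q + 0) 0 1 erefl erefl.
have i0_02 := cut m (6 * q + 0) 0 2 erefl erefl.
have i0_10 := cut m (6 * q + 0) 1 0 erefl erefl.
have i0_12 := cut m (6 * q + 0) 1 2 erefl erefl.
have i0_20 := cut m (6 * q + 0) 2 0 erefl erefl.
have i0_21 := cut m (6 * q + 0) 2 1 erefl erefl.
have i1_01 := cut m (6 * q + 1) 0 1 erefl erefl.
have i1_02 := cut m (6 * q + 1) 0 2 erefl erefl.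
have i1_10 := cut m (6 * q + 1) 1 0 erefl erefl.
have i1_12 := cut m (6 * q + 1) 1 2 erefl erefl.
have i1_20 := cut m (6 * q + 1) 2 0 erefl erefl.
have i1_21 := cut m (6 * q + 1) 2 1 erefl erefl.
have i2_01 := cut m (6 * q + 2) 0 1 erefl erefl.
have i2_02 := cut m (6 * q + 2) 0 2 erefl erefl.
have i2_10 := cut m (6 * q + 2) 1 0 erefl erefl.
have i2_12 := cut m (6 * q + 2) 1 2 erefl erefl.
have i2_20 := cut m (6 * q + 2) 2 0 erefl erefl.
have i2_21 := cut m (6 * q + 2) 2 1 erefl erefl.
have i3_01 := cut m (6 * q + 3) 0 1 erefl erefl.
have i3_02 := cut m (6 * q + 3) 0 2 erefl erefl.
have i3_10 := cut m (6 * q + 3) 1 0 erefl erefl.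
have i3_12 := cut m (6 * q + 3) 1 2 erefl erefl.
have i3_20 := cut m (6 * q + 3) 2 0 erefl erefl.
have i3_21 := cut m (6 * q + 3) 2 1 erefl erefl.
have i4_01 := cut m (6 * q + 4) 0 1 erefl erefl.
have i4_02 := cut m (6 * q + 4) 0 2 erefl erefl.
have i4_10 := cut m (6 * q + 4) 1 0 erefl erefl.
have i4_12 := cut m (6 * q + 4) 1 2 erefl erefl.
have i4_20 := cut m (6 * q + 4) 2 0 erefl erefl.
have i4_21 := cut m (6 * q + 4) 2 1 erefl erefl.
have i5_01 := cut m (6 * q + 5) 0 1 erefl erefl.
have i5_02 := cut m (6 * q + 5) 0 2 erefl erefl.
have i5_10 := cut m (6 * q + 5) 1 0 erefl erefl.
have i5_12 := cut m (6 * q + 5) 1 2 erefl erefl.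
have i5_20 := cut m (6 * q + 5) 2 0 erefl erefl.
have i5_21 := cut m (6 * q + 5) 2 1 erefl erefl.
have sp1_0 := spoke1 q m 0 (6 * q + 1) erefl.
have sp2_0 := spoke2 q m 0 (6 * q + 1) erefl.
have sp1_1 := spoke1 q m 1 (6 * q + 2) erefl.
have sp2_1 := spoke2 q m 1 (6 * q + 2) erefl.
have sp1_2 := spoke1 q m 2 (6 * q + 3) erefl.
have sp2_2 := spoke2 q m 2 (6 * q + 3) erefl.
have sp1_3 := spoke1 q m 3 (6 * q + 4) erefl.
have sp2_3 := spoke2 q m 3 (6 * q + 4) erefl.
have sp1_4 := spoke1 q m 4 (6 * q + 5) erefl.
have sp2_4 := spoke2 q m 4 (6 * q + 5) erefl.
have sp1_5 := spoke1 q m 5 (6 * q + 0) erefl.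
have sp2_5 := spoke2 q m 5 (6 * q + 0) erefl.
have bg := bdc_ge q m.
case: b hb => [|[|[|//]]] _; rewrite ?(cnt_split q m 0 (6 * q + 0) (6 * q + 1)) // ?(cnt_split q m 1 (6 * q + 2) (6 * q + 3)) //
  ?(cnt_split q m 2 (6 * q + 4) (6 * q + 5)) //;
case: i hi => [|[|[|[|[|[|//]]]]]] _ /=; lia.
Qed.

Lemma deep d l p s : (forall x, x \in cellL p l -> J x) -> s < 3 ->
  2 ^ l <= cnt (p %/ 6 ^ d) (l + d) s + bdc (p %/ 6 ^ d) (l + d).
Proof.
move=> hJ; elim: d s => [|d IH] s hs.
  rewrite expn0 divn1 addn0.
  suff -> : cnt p l s = 2 ^ l by rewrite leq_addr.
  rewrite /C1.cnt (eq_big_nat _ _ (F2 := fun _ => 1)); last first.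
    by move=> t /andP[_ ht]; rewrite hJ // sface_cell.
  by rewrite sum_nat_const_nat muln1 subn0.
set q' := p %/ 6 ^ d.
have eq' : p %/ 6 ^ d.+1 = q' %/ 6 by rewrite expnS mulnC divnMA.
have hq' : q' = 6 * (q' %/ 6) + q' %% 6 by rewrite mulnC -divn_eq.
have hi : q' %% 6 < 6 by rewrite ltn_pmod.
have := IH (if (q' %% 6)./2 == s then 0 else 1) (ltac:(by case: ifP)).
rewrite -/q' => h.
have := route (l + d) (q' %/ 6) (q' %% 6) s hi hs; rewrite -hq' => h2.
rewrite eq' addnS; exact: leq_trans h h2.
Qed.
End Comb2.

End C2.
Import C2.

Module C3.

Section Comb3.
Variable J : pred nat.
Local Notation cnt := (cnt J).
Local Notation bdc := (bdc J).
Local Notation SS := (SS J).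
Local Notation cross := (cross J).

Lemma cross0 q m i : i < 6 -> cross q m i = 0 -> J (sa q m i 0) = J (sb q m i 0).
Proof.
move=> hi; rewrite /C1.cross big_ltn ?expn_gt0 //.
by case: (J (sa q m i 0)); case: (J (sb q m i 0)).
Qed.

Lemma conn m q : bdc q m = 0 -> exists b, forall x, x \in cellL q m -> J x = b.
Proof.
elim: m q => [|m IH] q.
  move=> _; exists (J (q * 6 ^ 0)) => x; rewrite /cellL expn0 /= inE => /eqP ->.
  by rewrite muln1.
move=> h0; have bg := bdc_ge J q m; rewrite h0 in bg.
have z0 : bdc (6 * q + 0) m = 0 by lia.
have c0 : cross q m 0 = 0 by lia.
have z1 : bdc (6 * q + 1) m = 0 by lia.
have c1 : cross q m 1 = 0 by lia.
have z2 : bdc (6 * q + 2) m = 0 by lia.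
have c2 : cross q m 2 = 0 by lia.
have z3 : bdc (6 * q + 3) m = 0 by lia.
have c3 : cross q m 3 = 0 by lia.
have z4 : bdc (6 * q + 4) m = 0 by lia.
have c4 : cross q m 4 = 0 by lia.
have z5 : bdc (6 * q + 5) m = 0 by lia.
have c5 : cross q m 5 = 0 by lia.
have [b0 hb0] := IH _ z0.
have [b1 hb1] := IH _ z1.
have [b2 hb2] := IH _ z2.
have [b3 hb3] := IH _ z3.
have [b4 hb4] := IH _ z4.
have [b5 hb5] := IH _ z5.
have e0 : b0 = b1.
  have := cross0 q m 0 erefl c0; rewrite -(hb0 (sa q m 0 0)) -?(hb1 (sb q m 0 0)) //.
  - by rewrite /sb; apply: sface_cell => //; have := expn_gt0 2 m; lia.
  - by rewrite /sa; apply: sface_cell => //; rewrite expn_gt0.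
have e1 : b1 = b2.
  have := cross0 q m 1 erefl c1; rewrite -(hb1 (sa q m 1 0)) -?(hb2 (sb q m 1 0)) //.
  - by rewrite /sb; apply: sface_cell => //; have := expn_gt0 2 m; lia.
  - by rewrite /sa; apply: sface_cell => //; rewrite expn_gt0.
have e2 : b2 = b3.
  have := cross0 q m 2 erefl c2; rewrite -(hb2 (sa q m 2 0)) -?(hb3 (sb q m 2 0)) //.
  - by rewrite /sb; apply: sface_cell => //; have := expn_gt0 2 m; lia.
  - by rewrite /sa; apply: sface_cell => //; rewrite expn_gt0.
have e3 : b3 = b4.
  have := cross0 q m 3 erefl c3; rewrite -(hb3 (sa q m 3 0)) -?(hb4 (sb q m 3 0)) //.
  - by rewrite /sb; apply: sface_cell => //; have := expn_gt0 2 m; lia.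
  - by rewrite /sa; apply: sface_cell => //; rewrite expn_gt0.
have e4 : b4 = b5.
  have := cross0 q m 4 erefl c4; rewrite -(hb4 (sa q m 4 0)) -?(hb5 (sb q m 4 0)) //.
  - by rewrite /sb; apply: sface_cell => //; have := expn_gt0 2 m; lia.
  - by rewrite /sa; apply: sface_cell => //; rewrite expn_gt0.
have e5 : b5 = b0.
  have := cross0 q m 5 erefl c5; rewrite -(hb5 (sa q m 5 0)) -?(hb0 (sb q m 5 0)) //.
  - by rewrite /sb; apply: sface_cell => //; have := expn_gt0 2 m; lia.
  - by rewrite /sa; apply: sface_cell => //; rewrite expn_gt0.
exists b0 => x; rewrite cellL_split !mem_cat.
case/or4P; first by move/hb0.
- by move/hb1; rewrite -e0.
- by move/hb2; rewrite -e1 -e0.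
case/orP; first by move/hb3; rewrite -e2 -e1 -e0.
case/orP; first by move/hb4; rewrite -e3 -e2 -e1 -e0.
by move/hb5; rewrite e5.
Qed.



Lemma regroup (F : nat -> nat) n :
  \sum_(0 <= r < n * 6) F r = \sum_(0 <= r < n) \sum_(0 <= i < 6) F (6 * r + i).
Proof.
elim: n => [|n IH]; first by rewrite !big_geq.
rewrite [RHS](big_nat_recr n 0) // mulSn addnC [LHS](@big_cat_nat _ _ _ (n * 6)) //; last by rewrite leq_addr.
rewrite IH; congr (_ + _).
rewrite -{1}[n * 6]add0n big_addn addKn.
by apply: eq_big_nat => i _; rewrite addnC mulnC.
Qed.

Lemma bdc_sum d m q : \sum_(0 <= r < 6 ^ d) bdc (q * 6 ^ d + r) m <= bdc q (m + d).
Proof.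
elim: d m q => [|d IH] m q.
  by rewrite expn0 big_nat1 muln1 addn0 addn0.
rewrite expnSr regroup addnS -addSn.
apply: leq_trans (IH m.+1 q).
apply: leq_sum => r _.
apply: leq_trans (bdc_ge J (q * 6 ^ d + r) m).
rewrite (eq_big_nat _ _ (F2 := fun i => bdc (6 * (q * 6 ^ d + r) + i) m)); last first.
  by move=> i _; congr (C1.bdc J _ m); nia.
do 6 rewrite big_ltn //. rewrite big_geq //; lia.
Qed.

Lemma sum_eqr y N : \sum_(0 <= r < N) (y == r : nat) = (y < N).
Proof.
elim: N => [|N IH]; first by rewrite big_geq.
rewrite (big_nat_recr N 0) // IH /=.
case: (ltngtP y N) => h.
- by rewrite (ltn_trans h (ltnSn N)).
- by rewrite ltnS leqNgt h.
- by rewrite h ltnSn.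
Qed.

Lemma size_part (f : nat -> nat) N (s : seq nat) : (forall x, x \in s -> f x < N) ->
  size s = \sum_(0 <= r < N) count (fun x => f x == r) s.
Proof.
elim: s => [|x s IH] h.
  by rewrite big1_seq.
rewrite /= big_split /= sum_eqr h ?mem_head // IH // => y hy.
by apply: h; rewrite inE hy orbT.
Qed.

End Comb3.

End C3.
Import C3.

Module F1.

Lemma expn_mono a b e : a <= b -> a ^ e <= b ^ e.
Proof. by move=> h; elim: e => [|e IH] //; rewrite !expnS leq_mul. Qed.

Lemma num_ineq m c l : 16 ^ l <= m -> m <= c * 6 ^ l -> m <= c ^ 4.
Proof.
move=> h16 hm.
have P4le : (6 ^ l) ^ 4 <= m ^ 3.
  rewrite expnAC; apply: (@leq_trans ((16 ^ 3) ^ l)); first exact: expn_mono.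
  rewrite expnAC; exact: expn_mono.
have : m * (6 ^ l) ^ 4 <= c ^ 4 * (6 ^ l) ^ 4.
  apply: (@leq_trans (m * m ^ 3)); first exact: leq_mul.
  rewrite -expnS -expnMn; exact: expn_mono.
by rewrite leq_pmul2r // !expn_gt0.
Qed.

Lemma mem_le_sumn (s : seq nat) x : x \in s -> x <= sumn s.
Proof.
elim: s => [|y s IH] //=; rewrite inE => /orP[/eqP ->|h]; first exact: leq_addr.
exact: leq_trans (IH h) (leq_addl _ _).
Qed.

Lemma count_cell (J : seq nat) P r : uniq J -> 0 < P ->
  count (fun x => x %/ P == r) J <= has (fun x => x %/ P == r) J * P.
Proof.
move=> u hP; case: (boolP (has _ _)) => h.
  rewrite mul1n -size_filter.
  rewrite -[X in _ <= X](size_iota (r * P) P).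
  apply: uniq_leq_size; first exact: filter_uniq.
  move=> x; rewrite mem_filter => /andP[/eqP hx _]; rewrite mem_iota.
  rewrite -hx leq_trunc_div /= addnC -mulSn ltn_ceil //.
by rewrite mul0n leqn0 -(negbK (_ == 0)) -lt0n -has_count.
Qed.

Definition JP (J : seq nat) : pred nat := fun x => x \in J.

Lemma bdc_le_E (J : seq nat) B L : (forall u v, u \in J -> hex_adj u v -> v < B) ->
  bdc (JP J) 0 L <= size [seq e <- prs J (iota 0 B) | Pb (JP J) e].
Proof.
move=> hB; rewrite size_filter /C1.bdc /SS; apply: count_sub.
  apply: allpairs_uniq; rewrite ?iota_uniq //.
  by move=> [a b] [c d] _ _ /= [-> ->].
move=> [a b] _; rewrite /Pb /JP /= => /andP[/andP[ha hb] /adjbP hadj].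
apply: allpairs_f => //; rewrite mem_iota add0n /=; exact: hB hadj.
Qed.

Lemma main_nat (J : seq nat) : uniq J -> J != [::] ->
  exists L, size J <= 16 * (bdc (JP J) 0 L) ^ 4.
Proof.
move=> uJ nJ.
set m := size J.
have hm : 0 < m by rewrite /m lt0n size_eq0.
set M0 := sumn J.
have hJ : forall x, x \in J -> x < 6 ^ M0.
  move=> x hx; apply: leq_ltn_trans (mem_le_sumn J x hx) _; exact: ltn_expl.
set l := trunc_log 16 m.
have h1 : 16 ^ l <= m by apply: trunc_logP.
have h2 : m < 16 ^ l.+1 by apply: trunc_log_ltn.
have hP : 0 < 6 ^ l by rewrite expn_gt0.
case: (Classical_Prop.classic (exists r, forall x, x \in cellL r l -> JP J x)) => [[r hr]|nf].
- have rin : r * 6 ^ l \in J by apply: hr; rewrite cellP mulnK.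
  have rlt : r < 6 ^ M0 by apply: leq_ltn_trans (hJ _ rin); rewrite leq_pmulr.
  have := deep (JP J) M0.+1 l r 1 hr erefl.
  rewrite divn_small; last by apply: leq_trans rlt _; rewrite leq_pexp2l.
  have -> : cnt (JP J) 0 (l + M0.+1) 1 = 0.
    rewrite /C1.cnt big1_seq // => t; rewrite mem_index_iota => /andP[_ ht].
    apply/eqP; rewrite eqb0; apply/negP => /hJ.
    rewrite /sface mul0n add0n addnS /= => h.
    have hA : 6 ^ M0 <= 6 ^ (l + M0) by rewrite leq_pexp2l // leq_addl.
    move: h hA; set X := 6 ^ (l + M0); set Y := t %/ _; set Z := off _ _ _; nia.
  rewrite add0n => hb.
  exists (l + M0.+1).
  apply: leq_trans (ltnW h2) _.
  rewrite expnS leq_mul2l /= (_ : 16 = 2 ^ 4) // expnAC; exact: expn_mono.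
- exists (l + M0).
  have hc : forall r, has (fun x => x %/ 6 ^ l == r) J -> 0 < bdc (JP J) r l.
    move=> r hr; rewrite lt0n; apply/negP => /eqP h0.
    have [b hb] := conn (JP J) l r h0.
    case: b hb => hb.
      by apply: nf; exists r => x hx; rewrite hb.
    case/hasP: hr => x xJ hx.
    have := hb x; rewrite cellP hx /JP xJ => /(_ isT).
    done.
  set c := \sum_(0 <= r < 6 ^ M0) (has (fun x => x %/ 6 ^ l == r) J : nat).
  have hcB : c <= bdc (JP J) 0 (l + M0).
    apply: leq_trans (bdc_sum (JP J) M0 l 0).
    apply: leq_sum => r _; rewrite mul0n add0n.
    by case: (boolP (has _ _)) => h //; apply: hc.
  have hsize : m <= c * 6 ^ l.
    rewrite /m (size_part (fun x => x %/ 6 ^ l) (6 ^ M0) J); last first.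
      by move=> x hx; apply: leq_ltn_trans (leq_div x _) (hJ x hx).
    rewrite /c big_distrl /=; apply: leq_sum => r _; exact: count_cell.
  have := num_ineq _ _ _ h1 hsize => hc4.
  apply: leq_trans hc4 _; apply: leq_trans (expn_mono _ _ 4 hcB) _.
  exact: leq_pmull.
Qed.

End F1.
Import F1.

From Stdlib Require Import Reals Lra.
Open Scope R_scope.

Lemma real_step (m e : nat) : (0 < m)%nat -> (m <= muln 16 (expn e 4))%nat ->
  / 2 * Rpower (INR m) (/ 4) <= INR e.
Proof.
move=> hm he.
have he0 : (0 < e)%nat.
  rewrite lt0n; apply/negP => /eqP e0; rewrite e0 in he; by move: he; rewrite leqNgt hm.
have hx : 0 < INR e by apply: lt_0_INR; apply/ltP.
have hmr : 0 < INR m by apply: lt_0_INR; apply/ltP.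
have hle : INR m <= 16 * INR e ^ 4.
  have := le_INR _ _ (elimT leP he).
  rewrite !expnS expn0 muln1 -!multE !mult_INR => h.
  have -> : INR e ^ 4 = INR e * (INR e * (INR e * INR e)) by rewrite /= Rmult_1_r.
  have e16 : INR 16 = 16 by simpl; lra.
  by rewrite -e16.
have p4 : forall y, 0 < y -> Rpower (y ^ 4) (/ 4) = y.
  move=> y hy; rewrite -Rpower_pow // Rpower_mult.
  rewrite (_ : INR 4 * / 4 = 1); first exact: Rpower_1.
  rewrite (_ : INR 4 = 4); first by apply: Rinv_r; lra.
  by simpl; lra.
have h16 : Rpower 16 (/ 4) = 2.
  by rewrite (_ : 16 = 2 ^ 4); [apply: p4; lra | simpl; lra].
have := Rle_Rpower_l (INR m) (16 * INR e ^ 4) (/ 4) (ltac:(lra)) (conj hmr hle).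
rewrite -Rpower_mult_distr; [|lra|apply: pow_lt; lra].
rewrite h16 p4 //; lra.
Qed.

Theorem lemma5p4 :
  exists k eps : R, 0 < k /\ 0 < eps /\
    forall J : seq nat, uniq J -> J <> [::] ->
      exists E : seq (nat * nat),
        uniq E /\ (forall e, e \in E <-> hex_boundary J e) /\
        k * Rpower (INR (size J)) eps <= INR (size E).
Proof.
exists (/ 2), (/ 4); split; first lra; split; first lra.
move=> J uJ nJ.
set B := expn 6 (sumn J).+1.
have hB : forall u v, u \in J -> hex_adj u v -> (v < B)%nat.
  move=> u v hu hadj; apply: (nbr_bound (sumn J) u v _ hadj).
  apply: leq_ltn_trans (mem_le_sumn J u hu) _; exact: ltn_expl.
exists [seq e <- prs J (iota 0 B) | Pb (JP J) e].
split; [|split].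
- apply: filter_uniq; apply: allpairs_uniq; rewrite ?iota_uniq //.
  by move=> [a b] [c d] _ _ /= [-> ->].
- move=> [a b]; rewrite mem_filter /Pb /JP /hex_boundary /=; split.
    by case/andP => /andP[/andP[h1 h2] /adjbP h3] _.
  move=> [h1 [h2 h3]]; rewrite h1 h2 /=; apply/andP; split; first exact/adjbP.
  apply: allpairs_f => //; rewrite mem_iota add0n; exact: hB h3.
- have nJ' : J != [::] by apply/eqP.
  have [L hL] := main_nat J uJ nJ'.
  apply: real_step; first by rewrite lt0n size_eq0.
  apply: leq_trans hL _; rewrite leq_mul2l /=; apply: expn_mono.
  exact: bdc_le_E.
Qed.
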